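(* For every $g\in G(\Gamma)$, the number of walls in $\mathbb{W}$ separating $e$ and $g$ equals $2|g|_r$; that is, $d_{\mathbb{W}}(e,g)=2|g|_r$.
   Context: $G(\Gamma)$ is the graph product of groups $\{G_v\}_{v\in\Gamma}$ over a finite simplicial graph $\Gamma$, with reduced word length $|\cdot|_r$ (length of a word in the vertex groups that cannot be shortened by swapping consecutive syllables from adjacent vertex groups, merging consecutive syllables from the same vertex group, or deleting identities). For $v\in\Gamma$, $\mathbb{A}_v=\{g:\exists g_v\in G_v,\ |g_vg|_r<|g|_r\}$, and $\mathbb{W}=\{k\mathbb{A}_v:k\in G(\Gamma),v\in\Gamma\}$, each $k\mathbb{A}_v$ regarded as the wall $(k\mathbb{A}_v,G(\Gamma)\setminus k\mathbb{A}_v)$ (distinct sets counted once). A wall separates $x,y$ if one lies in $k\mathbb{A}_v$ and the other in its complement; $d_{\mathbb{W}}(x,y)$ is the number of walls in $\mathbb{W}$ separating $x$ and $y$. *)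

(* Defs.v *)
From Stdlib Require Import Relations List.
From mathcomp Require Import all_boot.
Set Implicit Arguments. Unset Strict Implicit. Unset Printing Implicit Defensive.

Record Grp := {
  gcar :> Type;
  gmul : gcar -> gcar -> gcar;
  gone : gcar;
  ginv : gcar -> gcar;
  gmulA : forall x y z, gmul x (gmul y z) = gmul (gmul x y) z;
  gmul1l : forall x, gmul gone x = x;
  gmulVl : forall x, gmul (ginv x) x = gone }.

Section GraphProduct.
Variables (V : finType) (E : rel V) (G : V -> Grp).

Definition syl := {v : V & gcar (G v)}.
Definition mk_syl (v : V) (x : gcar (G v)) : syl := existT (fun v => gcar (G v)) v x.
(* words in the vertex groups; elements of G(Gamma) are represented by words *)
Definition word := seq syl.

Inductive step : word -> word -> Prop :=
| st_swap (w1 w2 : word) (a b : syl) :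
    E (tag a) (tag b) -> step (w1 ++ a :: b :: w2) (w1 ++ b :: a :: w2)
| st_merge (w1 w2 : word) (v : V) (x y : gcar (G v)) :
    step (w1 ++ mk_syl x :: mk_syl y :: w2) (w1 ++ mk_syl (gmul x y) :: w2)
| st_del (w1 w2 : word) (v : V) :
    step (w1 ++ mk_syl (gone (G v)) :: w2) (w1 ++ w2).

(* two words represent the same element of G(Gamma) *)
Definition wequiv : word -> word -> Prop := clos_refl_sym_trans word step.
Definition reduces : word -> word -> Prop := clos_refl_trans word step.
Definition reduced (w : word) : Prop := forall w', reduces w w' -> size w <= size w'.
Definition rlen (g : word) (n : nat) : Prop :=
  exists w, [/\ reduced w, wequiv w g & size w = n].

(* group operations on words: product = concatenation, identity = [::] *)
Definition winv (w : word) : word :=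
  rev (map (fun s : syl => mk_syl (ginv (tagged s))) w).

Definition inA (v : V) (g : word) : Prop :=
  exists (x : gcar (G v)) (n m : nat), [/\ rlen (mk_syl x :: g) n, rlen g m & n < m].

(* x \in k A_v  iff  k^-1 x \in A_v ; a wall is indexed by (k, v) *)
Definition in_wall (p : word * V) (x : word) : Prop := inA p.2 (winv p.1 ++ x).
Definition same_wall (p q : word * V) : Prop := forall x, in_wall p x <-> in_wall q x.
Definition separates (p : word * V) (x y : word) : Prop := ~ (in_wall p x <-> in_wall p y).

Fixpoint distinct_walls (L : seq (word * V)) : Prop :=
  match L with
  | [::] => True
  | p :: L' => (forall q, List.In q L' -> ~ same_wall p q) /\ distinct_walls L'
  end.

Definition dW (x y : word) (n : nat) : Prop :=
  exists L : seq (word * V),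
    [/\ size L = n,
        forall p, List.In p L -> separates p x y,
        distinct_walls L &
        forall p, separates p x y -> exists2 q, List.In q L & same_wall p q].

End GraphProduct.

(* Main.v *)
From Stdlib Require Import Relations ClassicalEpsilon FunctionalExtensionality.
From Stdlib Require List.
From mathcomp Require Import all_boot.
Require Import Defs.
Set Implicit Arguments. Unset Strict Implicit. Unset Printing Implicit Defensive.

Section GroupFacts.
Variable H : Grp.
Local Notation "x * y" := (gmul x y).
Local Notation one := (gone H).

Lemma gmulV (x : H) : x * ginv x = one.
Proof.
have e : x * ginv x = ginv (ginv x) * ginv x * (x * ginv x).
  by rewrite gmulVl gmul1l.
by rewrite e -gmulA (gmulA (ginv x)) gmulVl gmul1l gmulVl.
Qed.

Lemma gmul1r (x : H) : x * one = x.
Proof. by rewrite -(gmulVl x) gmulA gmulV gmul1l. Qed.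

Lemma ginvK (x : H) : ginv (ginv x) = x.
Proof. by rewrite -(gmul1r (ginv (ginv x))) -(gmulVl x) gmulA gmulVl gmul1l. Qed.

Lemma ginv1 : ginv one = one.
Proof. by rewrite -{2}(gmulVl one) gmul1r. Qed.

Lemma ginvM (x y : H) : ginv (x * y) = ginv y * ginv x.
Proof.
have e : (x * y) * (ginv y * ginv x) = one.
  by rewrite -gmulA (gmulA y) gmulV gmul1l gmulV.
by rewrite -[ginv (x*y)]gmul1r -e gmulA gmulVl gmul1l.
Qed.

Lemma gcancel (x y z : H) : x * y = x * z -> y = z.
Proof. by move=> e; rewrite -(gmul1l y) -(gmul1l z) -(gmulVl x) -!gmulA e. Qed.

Lemma ginv_neq1 (x : H) : x <> one -> ginv x <> one.
Proof. by move=> nx e; apply: nx; rewrite -(ginvK x) e ginv1. Qed.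
End GroupFacts.

Section Pil.
Variables (V : finType) (E : rel V) (Esym : symmetric E) (Eirr : irreflexive E) (G : V -> Grp).

Local Notation syl := (syl G).
Local Notation word := (word G).

Definition is1 (v : V) (x : G v) : bool :=
  if excluded_middle_informative (x = gone (G v)) then true else false.
Lemma is1P v (x : G v) : reflect (x = gone (G v)) (is1 x).
Proof. by rewrite /is1; case: excluded_middle_informative => h; constructor. Qed.

Definition pil := forall v : V, seq (option (G v)).
Definition pempty : pil := fun v => [::].
Definition push (v : V) (x : G v) (P : pil) : pil :=
  dfwith (fun w => if ~~ E v w then None :: P w else P w) (Some x :: P v).
Definition pop (v : V) (P : pil) : pil :=
  fun w => if ~~ E v w then behead (P w) else P w.
Definition top (P : pil) v : option (G v) := head None (P v).
Definition Tp (P : pil) v : bool := if top P v is Some _ then true else false.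

Definition act (v : V) (x : G v) (P : pil) : pil :=
  if is1 x then P else
  match top P v with
  | Some y => if is1 (gmul x y) then pop v P else push (gmul x y) (pop v P)
  | None => push x P
  end.

Definition acts (w : word) (P : pil) : pil := foldr (fun s Q => act (tagged s) Q) P w.
Definition phi (w : word) : pil := acts w pempty.

Lemma Evv v : E v v = false. Proof. exact: Eirr. Qed.
Lemma E_neq v w : E v w -> v != w.
Proof. by move=> e; apply/eqP => h; subst; rewrite Evv in e. Qed.

Lemma push_v v (x : G v) P : push x P v = Some x :: P v.
Proof. by rewrite /push dfwith_in. Qed.
Lemma push_w v (x : G v) P w : v != w -> push x P w = if ~~ E v w then None :: P w else P w.
Proof. by move=> h; rewrite /push dfwith_out. Qed.
Lemma push_adj v (x : G v) P w : E v w -> push x P w = P w.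
Proof. by move=> h; rewrite push_w ?E_neq // h. Qed.

Lemma pop_push v (x : G v) P : pop v (push x P) = P.
Proof.
apply: functional_extensionality_dep => w; rewrite /pop.
case: (eqVneq v w) => [<-|ne]; first by rewrite Evv push_v.
by rewrite push_w //; case: (E v w).
Qed.

Lemma push_comm v w (x : G v) (y : G w) P : E v w ->
  push x (push y P) = push y (push x P).
Proof.
move=> evw; have ewv : E w v by rewrite Esym.
apply: functional_extensionality_dep => u.
case: (eqVneq v u) => [<-|nvu].
  by rewrite [LHS]push_v [RHS]push_adj // [in RHS]push_v push_adj.

case: (eqVneq w u) => [<-|nwu].
  by rewrite [LHS]push_adj // [LHS]push_v [RHS]push_v push_adj.

rewrite !push_w //; by case: (E v u); case: (E w u).
Qed.

Lemma act_push v (x : G v) z P : ~~ is1 x ->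
  act x (push z P) = if is1 (gmul x z) then P else push (gmul x z) P.
Proof.
move=> nx; rewrite /act (negbTE nx) /top push_v /= pop_push.
by case: (is1 (gmul x z)).
Qed.

Lemma act_notop v (x : G v) P : ~~ is1 x -> ~~ Tp P v -> act x P = push x P.
Proof. by move=> nx; rewrite /act (negbTE nx) /Tp; case: (top P v). Qed.

Inductive valid : pil -> Prop :=
| vnil : valid pempty
| vpush v (x : G v) P : valid P -> ~~ is1 x -> ~~ Tp P v -> valid (push x P).

Lemma Tp_push_v v (x : G v) P : Tp (push x P) v.
Proof. by rewrite /Tp /top push_v. Qed.
Lemma Tp_push_adj v (x : G v) P w : E v w -> Tp (push x P) w = Tp P w.
Proof. by move=> h; rewrite /Tp /top push_adj. Qed.
Lemma Tp_push_nadj v (x : G v) P w : v != w -> ~~ E v w -> Tp (push x P) w = false.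
Proof. by move=> h1 h2; rewrite /Tp /top push_w // h2. Qed.

Lemma decomp P v : valid P -> Tp P v ->
  exists (z : G v) (Q : pil), [/\ P = push z Q, valid Q, ~~ Tp Q v & ~~ is1 z].
Proof.
elim=> [|w y Q vQ IH ny nT]; first by rewrite /Tp /top.
case: (eqVneq w v) => [e|ne].
  by subst w => _; exists y, Q.
case evw: (E w v); last by rewrite Tp_push_nadj ?evw.
rewrite Tp_push_adj // => /IH [z [Q' [eQ vQ' nT' nz]]].
exists z, (push y Q'); split => //.
- by rewrite eQ push_comm.
- have evw' : E v w by rewrite Esym.
  apply: vpush => //; by rewrite -(Tp_push_adj z Q' evw') -eQ.
- by rewrite Tp_push_adj.
Qed.

Lemma is1_1 v : is1 (gone (G v)). Proof. exact/is1P. Qed.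

Definition pushc (v : V) (x : G v) (Q : pil) : pil := if is1 x then Q else push x Q.

Lemma act1 v (x : G v) P : is1 x -> act x P = P.
Proof. by rewrite /act => ->. Qed.

Lemma act_nT v (x : G v) P : ~~ Tp P v -> act x P = pushc x P.
Proof. by rewrite /act /pushc /Tp; case: (is1 x) => //; case: (top P v). Qed.

Lemma act_pc v (x : G v) z Q : ~~ is1 x -> act x (push z Q) = pushc (gmul x z) Q.
Proof. by move=> nx; rewrite act_push. Qed.

Lemma pushc_push_comm v w (x : G v) (y : G w) R : E v w ->
  pushc x (push y R) = push y (pushc x R).
Proof. by move=> e; rewrite /pushc; case: (is1 x) => //; rewrite push_comm. Qed.

Lemma pushc_comm v w (x : G v) (y : G w) R : E v w ->
  pushc x (pushc y R) = pushc y (pushc x R).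
Proof.
move=> e; rewrite /pushc; case: (is1 x); case: (is1 y) => //; exact: push_comm.
Qed.

Lemma Tp_pushc_adj v (x : G v) R w : E v w -> Tp (pushc x R) w = Tp R w.
Proof. by move=> e; rewrite /pushc; case: (is1 x) => //; rewrite Tp_push_adj. Qed.

Lemma valid_pushc v (x : G v) Q : valid Q -> ~~ Tp Q v -> valid (pushc x Q).
Proof. by rewrite /pushc; case: (boolP (is1 x)) => // nx vQ nT; apply: vpush. Qed.

Lemma valid_act v (x : G v) P : valid P -> valid (act x P).
Proof.
move=> vP; case: (boolP (is1 x)) => [h|nx]; first by rewrite act1.
case: (boolP (Tp P v)) => [T|nT]; last by rewrite act_nT //; exact: valid_pushc.
have [z [Q [-> vQ nTQ nz]]] := decomp vP T.
by rewrite act_pc //; apply: valid_pushc.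
Qed.


Lemma act_mul v (x y : G v) P : valid P -> act x (act y P) = act (gmul x y) P.
Proof.
move=> vP.
case: (is1P x) => [->|nx]; first by rewrite gmul1l act1 // is1_1.
case: (is1P y) => [->|ny]; first by rewrite gmul1r (act1 _ (is1_1 v)).
have nx' : ~~ is1 x by apply/is1P.
have ny' : ~~ is1 y by apply/is1P.
case: (boolP (Tp P v)) => [T|nT].
  have [z [Q [-> vQ nTQ nz]]] := decomp vP T.
  rewrite (act_pc _ _ ny') /pushc.
  case: (is1P (gmul y z)) => [yz1|yz].
    rewrite act_nT // /pushc (negbTE nx').
    case: (is1P (gmul x y)) => [xy1|xy].
      rewrite act1; last by apply/is1P.
      have -> : x = z.
        by rewrite -(gmul1r x) -yz1 gmulA xy1 gmul1l.
      done.
    rewrite act_pc; last by apply/is1P.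
    by rewrite /pushc -gmulA yz1 gmul1r (negbTE nx').
  rewrite act_pc // /pushc.
  case: (is1P (gmul x y)) => [xy1|xy].
    rewrite act1; last by apply/is1P.
    have e : gmul x (gmul y z) = z by rewrite gmulA xy1 gmul1l.
    rewrite e; case: (is1P z) => // z1; by move: nz; rewrite z1; case/is1P.
  by rewrite act_pc ?gmulA //; apply/is1P.
rewrite [act y P]act_nT // /pushc (negbTE ny') act_push //.
case: (boolP (is1 (gmul x y))) => [h|h]; first by rewrite act1.
by rewrite act_nT // /pushc (negbTE h).
Qed.

Lemma comm_case v w (x : G v) (y : G w) P : valid P -> E v w -> Tp P v ->
  ~~ is1 x -> ~~ is1 y -> act x (act y P) = act y (act x P).
Proof.
move=> vP evw T nx ny; have ewv : E w v by rewrite Esym.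
have [z [Q [eP vQ nTQ nz]]] := decomp vP T.
have TPw : Tp P w = Tp Q w by rewrite eP Tp_push_adj.
case: (boolP (Tp P w)) => [Tw|nTw].
  have [t [R [eQ vR nTR nt]]] := decomp vQ (etrans (esym TPw) Tw).
  rewrite eP eQ.
  rewrite [in LHS]push_comm // [in LHS](act_pc _ _ ny) [in LHS]pushc_push_comm //.
  rewrite [in LHS]act_pc // [in RHS]act_pc // [in RHS]pushc_push_comm //.
  by rewrite [in RHS]act_pc // pushc_comm.
rewrite [act y P]act_nT // /pushc (negbTE ny) eP push_comm // act_pc //.
rewrite [act x _]act_pc // act_nT; last by rewrite Tp_pushc_adj // -TPw.
rewrite /pushc (negbTE ny); case: (is1 (gmul x z)) => //; exact: push_comm.
Qed.

Lemma act_comm v w (x : G v) (y : G w) P : valid P -> E v w ->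
  act x (act y P) = act y (act x P).
Proof.
move=> vP evw; have ewv : E w v by rewrite Esym.
case: (boolP (is1 x)) => [h|nx]; first by rewrite !(act1 _ h).
case: (boolP (is1 y)) => [h|ny]; first by rewrite !(act1 _ h).
case: (boolP (Tp P v)) => [T|nT]; first exact: comm_case.
case: (boolP (Tp P w)) => [T|nTw]; first by rewrite (comm_case vP ewv).
rewrite (act_nT _ nT) (act_nT _ nTw) /pushc (negbTE nx) (negbTE ny).
rewrite act_nT ?Tp_push_adj // act_nT ?Tp_push_adj //.
by rewrite /pushc (negbTE nx) (negbTE ny) push_comm.
Qed.

Lemma valid_acts w P : valid P -> valid (acts w P).
Proof. by elim: w => //= a w IH vP; apply: valid_act; apply: IH. Qed.

Lemma acts_cat w1 w2 P : acts (w1 ++ w2) P = acts w1 (acts w2 P).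
Proof. by rewrite /acts foldr_cat. Qed.

Lemma step_acts (a b : word) P : step E a b -> valid P -> acts a P = acts b P.
Proof.
case=> [w1 w2 s t e|w1 w2 v x y|w1 w2 v] vP; rewrite !acts_cat /=.
- by case: s t e => [vs xs] [vt xt] /= e; rewrite act_comm //; apply: valid_acts.
- by rewrite act_mul //; apply: valid_acts.
- by rewrite act1 // is1_1.
Qed.

Lemma equiv_acts (a b : word) P : wequiv E a b -> valid P -> acts a P = acts b P.
Proof.
move=> h vP; elim: h => [x y s|x|x y _ IH|x y z _ IH1 _ IH2] //.
- exact: step_acts.
- by rewrite IH1 IH2.
Qed.

Lemma reduces_acts (a b : word) P : reduces E a b -> valid P -> acts a P = acts b P.
Proof.
move=> h vP; elim: h => [x y s|x|x y z _ IH1 _ IH2] //.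
- exact: step_acts.
- by rewrite IH1 IH2.
Qed.

Definition ccol (T : Type) (c : seq (option T)) : nat := count (fun o => isSome o) c.
Definition cnt (P : pil) : nat := \sum_(v : V) ccol (P v).

Lemma cnt_empty : cnt pempty = 0.
Proof. by rewrite /cnt big1. Qed.

Lemma cnt_push v (x : G v) P : cnt (push x P) = (cnt P).+1.
Proof.
rewrite /cnt (bigD1 v) //= [in RHS](bigD1 v) //= push_v /ccol /= add1n -addSn.
congr (_ + _); apply: eq_bigr => w nw; rewrite push_w; last by rewrite eq_sym.
by case: (E v w).
Qed.

Lemma cnt_pushc v (x : G v) P : cnt (pushc x P) <= (cnt P).+1.
Proof. by rewrite /pushc; case: (is1 x) => //; rewrite cnt_push. Qed.

Lemma act_cases v (x : G v) P : valid P ->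
  [\/ is1 x /\ act x P = P,
      [/\ ~~ is1 x, ~~ Tp P v & act x P = push x P] |
      Tp P v /\ cnt (act x P) <= cnt P].
Proof.
move=> vP; case: (boolP (is1 x)) => [h|nx]; first by apply: Or31; rewrite act1.
case: (boolP (Tp P v)) => [T|nT].
  apply: Or33; split => //.
  have [z [Q [eP _ _ _]]] := decomp vP T.
  by rewrite eP act_pc // cnt_push cnt_pushc.
by apply: Or32; split => //; rewrite act_nT // /pushc (negbTE nx).
Qed.

Lemma cnt_act_le v (x : G v) P : valid P -> cnt (act x P) <= (cnt P).+1.
Proof.
move=> vP; case: (act_cases x vP) => [[_ ->]|[_ _ ->]|[_ h]] //.
- by rewrite cnt_push.
- exact: leqW.
Qed.

Lemma valid_phi w : valid (phi w).
Proof. apply: valid_acts; exact: vnil. Qed.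

Lemma phi_cons (a : syl) w : phi (a :: w) = act (tagged a) (phi w).
Proof. by []. Qed.

Lemma cnt_le_size w : cnt (phi w) <= size w.
Proof.
elim: w => [|a w IH]; first by rewrite /phi /= cnt_empty.
rewrite phi_cons; apply: leq_trans (cnt_act_le _ (valid_phi w)) _; by [].
Qed.

Lemma red_cons (a : syl) w : cnt (phi (a :: w)) = (size w).+1 ->
  [/\ cnt (phi w) = size w, ~~ is1 (tagged a), ~~ Tp (phi w) (tag a)
    & phi (a :: w) = push (tagged a) (phi w)].
Proof.
rewrite phi_cons => h.
have hw := cnt_le_size w.
case: (act_cases (tagged a) (valid_phi w)) => [[_ e]|[na nT e]|[_ le]].
- by move: h; rewrite e => h; move: hw; rewrite h ltnn.
- have : cnt (phi w) = size w by move: h; rewrite e cnt_push => -[].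
  by move=> ?; split.
- by move: le; rewrite h => le; have := leq_trans le hw; rewrite ltnn.
Qed.

Lemma step_ctx (p q a b : word) : step E a b -> step E (p ++ a ++ q) (p ++ b ++ q).
Proof.
case=> [w1 w2 s t e|w1 w2 v x y|w1 w2 v].
- have -> : p ++ (w1 ++ s :: t :: w2) ++ q = (p ++ w1) ++ s :: t :: (w2 ++ q) by rewrite -!catA.
  have -> : p ++ (w1 ++ t :: s :: w2) ++ q = (p ++ w1) ++ t :: s :: (w2 ++ q) by rewrite -!catA.
  exact: st_swap.
- have -> : p ++ (w1 ++ mk_syl x :: mk_syl y :: w2) ++ q
     = (p ++ w1) ++ mk_syl x :: mk_syl y :: (w2 ++ q) by rewrite -!catA.
  have -> : p ++ (w1 ++ mk_syl (gmul x y) :: w2) ++ q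
     = (p ++ w1) ++ mk_syl (gmul x y) :: (w2 ++ q) by rewrite -!catA.
  exact: st_merge.
- have -> : p ++ (w1 ++ mk_syl (gone (G v)) :: w2) ++ q
     = (p ++ w1) ++ mk_syl (gone (G v)) :: (w2 ++ q) by rewrite -!catA.
  have -> : p ++ (w1 ++ w2) ++ q = (p ++ w1) ++ (w2 ++ q) by rewrite -!catA.
  exact: st_del.
Qed.

Lemma reduces_ctx (p q a b : word) : reduces E a b -> reduces E (p ++ a ++ q) (p ++ b ++ q).
Proof.
elim=> [x y s|x|x y z _ IH1 _ IH2].
- by apply: rt_step; apply: step_ctx.
- exact: rt_refl.
- exact: rt_trans IH1 IH2.
Qed.

Lemma reduces_cons (a : syl) w w' : reduces E w w' -> reduces E (a :: w) (a :: w').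
Proof. by move=> h; have := reduces_ctx [:: a] [::] h; rewrite !cats0. Qed.

Lemma front w v : cnt (phi w) = size w -> Tp (phi w) v ->
  exists (z : G v) u, reduces E w (mk_syl z :: u) /\ (size u).+1 = size w.
Proof.
elim: w => [|a w IH]; first by rewrite /phi /Tp /top.
move=> hc; have [hc' na nT ep] := red_cons hc.
rewrite ep; clear hc; case: a na nT ep => u y /= na nT ep.
case: (eqVneq u v) => [e|ne].
  subst u => _; exists y, w; split => //; exact: rt_refl.
case: (boolP (E u v)) => euv; last by rewrite Tp_push_nadj.
rewrite Tp_push_adj // => /(IH hc') [z [u0 [r sz]]].
exists z, (mk_syl y :: u0); split; last by rewrite /= sz.
apply: rt_trans (reduces_cons (mk_syl y) r) _.
apply: rt_step; have := @st_swap _ E G [::] u0 (mk_syl y) (mk_syl z) euv; exact.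
Qed.

Lemma equiv_phi (a b : word) : wequiv E a b -> phi a = phi b.
Proof. move=> h; exact: equiv_acts h vnil. Qed.
Lemma reduces_phi (a b : word) : reduces E a b -> phi a = phi b.
Proof. move=> h; exact: reduces_acts h vnil. Qed.

Lemma shrink w : cnt (phi w) < size w -> exists w', reduces E w w' /\ size w' < size w.
Proof.
elim: w => [|[v x] w IH] //.
move=> h; case: (ltnP (cnt (phi w)) (size w)) => [lt|ge].
  have [w' [r s]] := IH lt; exists (mk_syl x :: w'); split => //; exact: reduces_cons.
have eq : cnt (phi w) = size w by apply/eqP; rewrite eqn_leq cnt_le_size.
move: h; rewrite phi_cons /=.
case: (act_cases x (valid_phi w)) => [[h1 _]|[_ _ e]|[T _]] h.
- exists w; split => //; apply: rt_step.
  move/is1P: h1 => ->.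
  exact: (@st_del _ E G [::] w v).
- by move: h; rewrite e cnt_push eq ltnn.
- have [z [u [r s]]] := front eq T.
  exists (mk_syl (gmul x z) :: u); split; last by rewrite /= -s.
  apply: rt_trans (reduces_cons (mk_syl x) r) _; apply: rt_step.
  exact: (@st_merge _ E G [::] u v x z).
Qed.

Lemma red_of_cnt w : cnt (phi w) = size w -> reduced E w.
Proof.
move=> h w' r; rewrite -h.
rewrite (reduces_phi r).
exact: cnt_le_size.
Qed.

Lemma cnt_of_red w : reduced E w -> cnt (phi w) = size w.
Proof.
move=> rw; apply/eqP; rewrite eqn_leq cnt_le_size /=; rewrite leqNgt; apply/negP => lt.
have [w' [r s]] := shrink lt.
by have := rw w' r; rewrite leqNgt s.
Qed.

Lemma exists_red w : exists r, reduces E w r /\ cnt (phi r) = size r.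
Proof.
move: {2}(size w) (leqnn (size w)) => n; elim: n w => [|n IH] w hs.
  exists w; split; first exact: rt_refl.
  by apply/eqP; rewrite eqn_leq cnt_le_size /= (leq_trans hs).
case: (ltnP (cnt (phi w)) (size w)) => [lt|ge].
  have [w' [r s]] := shrink lt.
  have [r' [r2 e]] := IH w' (leq_trans (leq_trans s hs) (leqnn _)).
  by exists r'; split => //; exact: rt_trans r r2.
exists w; split; first exact: rt_refl.
by apply/eqP; rewrite eqn_leq cnt_le_size.
Qed.

Lemma rlenE g n : rlen E g n <-> cnt (phi g) = n.
Proof.
split.
  case=> w [rw e sz]; rewrite -(equiv_phi e) -sz; exact: cnt_of_red.
move=> h; have [r [rd e]] := exists_red g.
exists r; split.
- exact: red_of_cnt.
- apply: rst_sym; exact: clos_rt_clos_rst.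
- by rewrite -e -(reduces_phi rd) h.
Qed.

Lemma inAE v g : inA E v g <-> Tp (phi g) v.
Proof.
split.
  case=> x [n [m [/rlenE h1 /rlenE h2 lt]]].
  move: h1; rewrite phi_cons /=.
  case: (act_cases x (valid_phi g)) => [[_ e]|[_ _ e]|[T _]] // h1.
  - by move: lt; rewrite -h1 -h2 e ltnn.
  - by move: lt; rewrite -h1 -h2 e cnt_push ltnNge leqnSn.
move=> T; have [z [Q [eP vQ nT nz]]] := decomp (valid_phi g) T.
exists (ginv z), (cnt Q), (cnt (phi g)); split.
- apply/rlenE; rewrite phi_cons /= eP act_pc; last first.
    by apply/is1P; apply: ginv_neq1; apply/is1P.
  by rewrite gmulVl /pushc is1_1.
- exact/rlenE.
- by rewrite eP cnt_push.
Qed.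

Definition inv_s (s : syl) : syl := mk_syl (ginv (tagged s)).

Lemma winv_cat (a b : word) : winv (a ++ b) = winv b ++ winv a.
Proof. by rewrite /winv map_cat rev_cat. Qed.

Lemma winv_cons (a : syl) (w : word) : winv (a :: w) = winv w ++ [:: inv_s a].
Proof. by rewrite -cat1s winv_cat. Qed.

Lemma winv_rcons (a : syl) (w : word) : winv (rcons w a) = inv_s a :: winv w.
Proof. by rewrite -cats1 winv_cat. Qed.

Lemma size_winv (w : word) : size (winv w) = size w.
Proof. by rewrite /winv size_rev size_map. Qed.

Lemma winvK (w : word) : winv (winv w) = w.
Proof.
elim: w => [|[v x] w IH] //.
by rewrite winv_cons winv_cat IH /= /inv_s /= ginvK.
Qed.

Lemma acts_winvK w P : valid P -> acts (winv w) (acts w P) = P.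
Proof.
elim: w P => [|[v x] w IH] P vP //.
rewrite winv_cons acts_cat /= act_mul; last exact: valid_acts.
by rewrite gmulVl act1 ?is1_1 //; exact: IH.
Qed.

Lemma acts_Kwinv w P : valid P -> acts w (acts (winv w) P) = P.
Proof.
elim: w P => [|[v x] w IH] P vP //.
rewrite winv_cons acts_cat /= IH; last exact: valid_act.
by rewrite act_mul // gmulV act1 ?is1_1.
Qed.

Lemma step_winv (a b : word) : step E a b -> step E (winv a) (winv b).
Proof.
case=> [w1 w2 s t e|w1 w2 v x y|w1 w2 v].
- rewrite !winv_cat !winv_cons -!catA /=.
  apply: st_swap; case: s t e => [vs xs] [vt xt] /= e; by rewrite Esym.
- rewrite !winv_cat !winv_cons -!catA /= /inv_s /= ginvM.
  exact: st_merge.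
- rewrite !winv_cat !winv_cons -!catA /= /inv_s /= ginv1.
  exact: st_del.
Qed.

Lemma reduces_winv (a b : word) : reduces E a b -> reduces E (winv a) (winv b).
Proof.
elim=> [x y s|x|x y z _ IH1 _ IH2].
- by apply: rt_step; apply: step_winv.
- exact: rt_refl.
- exact: rt_trans IH1 IH2.
Qed.

Lemma reduced_winv (w : word) : reduced E w -> reduced E (winv w).
Proof.
move=> rw w' r; have := reduces_winv r; rewrite winvK => /rw.
by rewrite !size_winv.
Qed.

Lemma cnt_winv (w : word) : cnt (phi w) = size w -> cnt (phi (winv w)) = size w.
Proof.
move=> h; rewrite -size_winv; apply: cnt_of_red; apply: reduced_winv.
exact: red_of_cnt.
Qed.

Definition bot (P B : pil) : pil := fun w => P w ++ B w.

Lemma push_bot v (y : G v) P B : push y (bot P B) = bot (push y P) B.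
Proof.
apply: functional_extensionality_dep => w; rewrite /bot.
case: (eqVneq v w) => [<-|ne]; first by rewrite !push_v.
by rewrite !push_w //; case: (E v w).
Qed.

Lemma bot_empty B : bot pempty B = B.
Proof. by apply: functional_extensionality_dep => w. Qed.

Lemma Tp_bot P B u : Tp (bot P B) u = if P u is [::] then Tp B u else Tp P u.
Proof. by rewrite /Tp /top /bot; case: (P u). Qed.

Lemma Tp_bot_le P B u : Tp P u -> Tp (bot P B) u.
Proof. by rewrite Tp_bot /Tp /top; case: (P u). Qed.

Lemma Tp_B v (x : G v) u : Tp (push x pempty) u = (u == v).
Proof.
case: (eqVneq u v) => [->|ne]; first exact: Tp_push_v.
by rewrite /Tp /top push_w 1?eq_sym //; case: (E v u).
Qed.

Lemma phi_rcons (r : word) s : phi (rcons r s) = acts r (phi [:: s]).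
Proof. by rewrite /phi -cats1 acts_cat. Qed.

Lemma phi_single v (x : G v) : ~~ is1 x -> phi [:: mk_syl x] = push x pempty.
Proof. by move=> nx; rewrite /phi /= act_nT // /pushc (negbTE nx). Qed.

Lemma col_empty_adj (r : word) v : cnt (phi r) = size r -> phi r v = [::] ->
  all (fun a : syl => E (tag a) v) r.
Proof.
elim: r => [|a r IH] // hc; have [hc' na nT ep] := red_cons hc.
rewrite ep; case: (eqVneq (tag a) v) => [e|ne].
  by move: (tagged a); rewrite e => y; rewrite push_v.
case ea: (E (tag a) v); last by rewrite push_w // ea.
rewrite push_adj // => /(IH hc') /= ->; by rewrite ea.
Qed.

Lemma act_col_adj u v (x : G u) Q : E u v -> act x Q v = Q v.
Proof.
move=> e; rewrite /act; case: (is1 x) => //.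
case: (top Q u) => [y|]; last by rewrite push_adj.
by case: (is1 (gmul x y)); rewrite ?push_adj // /pop e.
Qed.

Lemma acts_col_adj (r : word) v Q : all (fun a : syl => E (tag a) v) r -> acts r Q v = Q v.
Proof.
elim: r => [|a r IH] //= /andP [e h]; by rewrite act_col_adj // IH.
Qed.

Lemma acts_comm_adj (r : word) v (y : G v) Q : all (fun a : syl => E (tag a) v) r ->
  valid Q -> acts r (act y Q) = act y (acts r Q).
Proof.
elim: r => [|a r IH] //= /andP [e h] vQ; rewrite IH // act_comm //; exact: valid_acts.
Qed.

Definition Free (r : word) v :=
  forall x : G v, ~~ is1 x -> phi (rcons r (mk_syl x)) = bot (phi r) (push x pempty).

Lemma Free_nil v : Free [::] v.
Proof. by move=> x nx; rewrite phi_single // bot_empty. Qed.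

Lemma Free_cons (a : syl) r v : Free r v -> cnt (phi (a :: r)) = (size r).+1 ->
  ~~ ((tag a == v) && (size (phi r v) == 0)) -> Free (a :: r) v.
Proof.
move=> F hc hb x nx; have [hc' na nT ep] := red_cons hc.
rewrite rcons_cons phi_cons F // ep act_nT; last first.
  rewrite Tp_bot; case e: (phi r (tag a)) => [|o c] //.
  rewrite Tp_B; apply/negP => /eqP ev; move: hb; rewrite ev eqxx /=.
  by move: e; rewrite ev => ->.
by rewrite /pushc (negbTE na) push_bot.
Qed.

Lemma decompR (r : word) v : cnt (phi r) = size r ->
  Free r v \/ exists r' (z : G v), [/\ cnt (phi r') = size r', Free r' v, ~~ is1 z &
     forall Q, valid Q -> acts r Q = acts r' (act z Q)].
Proof.
elim: r => [|[w y] r IH] hc; first by left; exact: Free_nil.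
have [hc' na nT ep] := red_cons hc; simpl in na, nT, ep.
case: (IH hc') => [F|[r0 [z [h0 F0 nz eq0]]]].
  case: (boolP ((w == v) && (size (phi r v) == 0))) => [/andP [/eqP ev /nilP e]|hb].
    subst w; right; exists r, y; split => // Q vQ.
    have ad := col_empty_adj hc' e.
    by rewrite /= acts_comm_adj.
  by left; apply: Free_cons.
have ephi : phi r = bot (phi r0) (push z pempty).
  rewrite -F0 // phi_rcons; exact: eq0 vnil.
have nT0 : ~~ Tp (phi r0) w.
  by apply: contra nT; rewrite ephi; apply: Tp_bot_le.
have hc0 : cnt (phi (mk_syl y :: r0)) = (size r0).+1.
  by rewrite phi_cons act_nT //= /pushc (negbTE na) cnt_push h0.
right; exists (mk_syl y :: r0), z; split => //.
- apply: Free_cons => //; apply/negP => /andP [/eqP /= ev /nilP e].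
  subst w; move: nT; rewrite ephi Tp_bot e Tp_B eqxx.
  by [].
- by move=> Q vQ; rewrite /= eq0.
Qed.

Lemma sep_key (m : word) u v (x : G v) : ~~ is1 x -> ~~ Tp (phi m) u ->
  Tp (phi (rcons m (mk_syl x))) u -> forall Q, valid Q -> Tp (acts m Q) u = Tp Q v.
Proof.
move=> nx nT T.
have [r [rd hc]] := exists_red m.
have em : forall Q, valid Q -> acts m Q = acts r Q by move=> Q vQ; apply: reduces_acts.
have ep : phi m = phi r by apply: reduces_phi.
have es : phi (rcons m (mk_syl x)) = phi (rcons r (mk_syl x)).
  by rewrite !phi_rcons em //; apply: valid_phi.
rewrite es in T; rewrite ep in nT.
case: (decompR v hc) => [F|[r' [z [h' F' nz eq']]]].
  move: T; rewrite F // Tp_bot; case e: (phi r u) => [|o c]; last first.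
    by move=> T; move: nT; rewrite T.
  rewrite Tp_B => /eqP eu; subst u.
  have ad := col_empty_adj hc e.
  by move=> Q vQ; rewrite em // /Tp /top acts_col_adj.
have epr : phi r = bot (phi r') (push z pempty).
  rewrite -F' // phi_rcons; exact: eq' vnil.
have eB : forall t : G v, ~~ is1 t -> push t pempty = act t pempty.
  by move=> t nt; rewrite act_nT // /pushc (negbTE nt).
move: T; rewrite phi_rcons phi_single // eB //.
rewrite eq'; last exact: valid_act vnil.
rewrite act_mul; last exact: vnil.
case: (boolP (is1 (gmul z x))) => [h|h].
  rewrite act1 // => T; move: nT; by rewrite epr (Tp_bot_le _ T).
rewrite -eB // -phi_single // -phi_rcons F' //.
by move: nT; rewrite epr !Tp_bot; case: (phi r' u) => [|? ?]; rewrite ?Tp_B => /negbTE ->.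
Qed.

Definition iw (p : word * V) (y : word) : bool := Tp (acts (winv p.1) (phi y)) p.2.

Lemma in_wallE p y : in_wall E p y <-> iw p y.
Proof.
have e : phi (winv p.1 ++ y) = acts (winv p.1) (phi y) by rewrite /phi acts_cat.
rewrite /in_wall /iw -e; exact: inAE.
Qed.

Lemma sepE p x y : separates E p x y <-> iw p x != iw p y.
Proof.
have hx := in_wallE p x; have hy := in_wallE p y.
rewrite /separates; split => h.
  apply/negP => /eqP e; apply: h; split => H.
    by apply/hy; rewrite -e; apply/hx.
  by apply/hx; rewrite e; apply/hy.
move=> [H1 H2]; move: h; case ex: (iw p x); case ey: (iw p y) => //= _.
- by have := H1 (proj2 hx ex); move/hy; rewrite ey.
- by have := H2 (proj2 hy ey); move/hx; rewrite ex.
Qed.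

Lemma same_wallE p q : same_wall E p q <-> forall x, iw p x = iw q x.
Proof.
split => h x.
  apply/idP/idP => H.
    by apply/in_wallE; apply/(h x); apply/in_wallE.
  by apply/in_wallE; apply/(h x); apply/in_wallE.
split => /in_wallE H; apply/in_wallE; by rewrite ?h // -h.
Qed.

Lemma distinct_cat (L0 L1 : seq (word * V)) : distinct_walls E L0 -> distinct_walls E L1 ->
  (forall p q, List.In p L0 -> List.In q L1 -> ~ same_wall E p q) ->
  distinct_walls E (L0 ++ L1).
Proof.
elim: L0 => [|p L0 IH] //= [hp d0] d1 cr; split; last first.
  by apply: IH => // p' q hp' hq; apply: cr => //; right.
move=> q /List.in_app_iff [hq|hq]; first exact: hp.
by apply: cr => //; left.
Qed.

Lemma acts_rcons (m : word) (s : syl) P : acts (rcons m s) P = acts m (act (tagged s) P).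
Proof. by rewrite -cats1 acts_cat. Qed.

Lemma sep_step (w0 : word) v (x : G v) p : ~~ is1 x ->
  iw p w0 != iw p (rcons w0 (mk_syl x)) ->
  same_wall E p (w0, v) \/ same_wall E p (rcons w0 (mk_syl x), v).
Proof.
case: p => k u nx.
set m := winv k ++ w0.
have e1 : iw (k, u) w0 = Tp (phi m) u by rewrite /iw /phi /m acts_cat.
have e2 : iw (k, u) (rcons w0 (mk_syl x)) = Tp (phi (rcons m (mk_syl x))) u.
  by rewrite /iw /m rcons_cat /phi acts_cat.
rewrite e1 e2; case T1: (Tp (phi m) u); case T2: (Tp (phi (rcons m (mk_syl x))) u) => //= _.
  right.
  have nx' : ~~ is1 (ginv x) by apply/is1P; apply: ginv_neq1; apply/is1P.
  have T3 : Tp (phi (rcons (rcons m (mk_syl x)) (mk_syl (ginv x)))) u.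
    rewrite /phi acts_rcons acts_rcons /= act_mul; last exact: vnil.
    by rewrite gmulV act1 ?is1_1.
  have key := sep_key nx' (negbT T2) T3.
  apply/same_wallE => y; rewrite /iw /= -key; last by apply: valid_acts; apply: valid_phi.
  by rewrite /m rcons_cat acts_cat acts_Kwinv //; apply: valid_phi.
left.
have key := sep_key nx (negbT T1) T2.
apply/same_wallE => y; rewrite /iw /= -key; last by apply: valid_acts; apply: valid_phi.
by rewrite /m acts_cat acts_Kwinv //; apply: valid_phi.
Qed.

Lemma red_prefix (w0 : word) s : cnt (phi (rcons w0 s)) = size (rcons w0 s) ->
  cnt (phi w0) = size w0.
Proof.
move=> /red_of_cnt h; apply: cnt_of_red => w' r.
have := reduces_ctx [::] [:: s] r; rewrite /= !cats1 => /h; by rewrite !size_rcons.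
Qed.

Lemma walls (w : word) : cnt (phi w) = size w ->
  exists L : seq (word * V),
    [/\ size L = 2 * size w, forall p, List.In p L -> iw p [::] != iw p w,
        distinct_walls E L &
        forall p, iw p [::] != iw p w -> exists2 q, List.In q L & same_wall E p q].
Proof.
elim/last_ind: w => [|w0 [v x] IH] hc.
  by exists [::]; split => // p; rewrite eqxx.
have hc0 := red_prefix hc.
have [L0 [sL0 sepL0 dL0 cL0]] := IH hc0.
set s := mk_syl x; set w := rcons w0 s.
have nx : ~~ is1 x.
  apply/negP => /is1P e; have rr := red_of_cnt hc.
  have r : reduces E w w0.
    apply: rt_step; rewrite /w /s e -cats1.
    by have := @st_del _ E G w0 [::] v; rewrite cats0.
  by move: (rr _ r); rewrite size_rcons ltnn.
have nx' : ~~ is1 (ginv x) by apply/is1P; apply: ginv_neq1; apply/is1P.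
have vpe : valid pempty by exact: vnil.
have F1 : iw (w0, v) w0 = false by rewrite /iw /= acts_winvK.
have cw0 := cnt_winv hc0.
have cw := cnt_winv hc.
have ew : winv w = inv_s s :: winv w0 by rewrite /w winv_rcons.
have F2 : iw (w0, v) [::] = false.
  rewrite /iw /=; apply/negP => T.
  have [z [Q [eP vQ nTQ nz]]] := decomp (valid_phi _) T.
  move: cw; rewrite ew phi_cons /= eP act_pc // size_rcons => h.
  have := cnt_pushc (gmul (ginv x) z) Q; rewrite h.
  by move: cw0; rewrite eP cnt_push => <-; rewrite ltnn.
have F3 : iw (w, v) w0 = true.
  rewrite /iw /= ew /= acts_winvK // act_nT // /pushc.
  by rewrite (negbTE nx') Tp_push_v.
have F4 : iw (w, v) [::] = true.
  have nT2 : ~~ Tp (phi (winv w0)) v by apply/negbT; exact: F2.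
  rewrite /iw /= ew /= act_nT // /pushc.
  by rewrite (negbTE nx') Tp_push_v.
have F5 : iw (w0, v) w = true.
  rewrite /iw /= /w /phi acts_rcons acts_winvK; last exact: valid_act.
  rewrite act_nT // /pushc.
  by rewrite (negbTE nx) Tp_push_v.
have F6 : iw (w, v) w = false by rewrite /iw /= acts_winvK.
have old : forall p, iw p [::] != iw p w0 -> iw p [::] != iw p w.
  move=> p hp; case: (boolP (iw p w0 != iw p w)) => [h|].
    case: (sep_step nx h) => /same_wallE e.
      by move: hp; rewrite !e -/s -/w F1 F2.
    by move: hp; rewrite !e -/s -/w F3 F4.
  by move/negPn/eqP => <-.
exists (L0 ++ [:: (w0, v); (w, v)]); split.
- by rewrite size_cat sL0 size_rcons /= mulnS addnC.
- move=> p /List.in_app_iff [hp|hp]; first by apply: old; apply: sepL0.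
  case: hp => [<-|[<-|[]]]; first by rewrite F2 F5.
  by rewrite F4 F6.
- apply: distinct_cat => //.
    split => //= q [<-|[]] /same_wallE e; by move: (e w0); rewrite F1 F3.
  move=> p q hp hq /same_wallE e; have := sepL0 p hp; rewrite !e.
  by case: hq => [<-|[<-|[]]]; rewrite ?F1 ?F2 ?F3 ?F4.
- move=> p hp; case: (boolP (iw p [::] != iw p w0)) => [h|].
    have [q hq sq] := cL0 p h; exists q => //; apply/List.in_app_iff; by left.
  move/negPn/eqP => e; rewrite e in hp.
  case: (sep_step nx hp) => sq.
    by exists (w0, v) => //; apply/List.in_app_iff; right; left.
  by exists (w, v) => //; apply/List.in_app_iff; right; right; left.
Qed.
End Pil.

Theorem mainTheorem11 (V : finType) (E : rel V)
  (Esym : symmetric E) (Eirr : irreflexive E) (G : V -> Grp)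
  (g : word G) (n : nat) :
  rlen E g n -> dW E [::] g (2 * n).
Proof.
case=> w [rw e sz].
have hc := cnt_of_red Esym Eirr rw.
have [L [sL sepL dL cL]] := walls Esym Eirr hc.
have ep : phi E g = phi E w by rewrite (equiv_phi Esym Eirr e).
have eiw : forall p, iw E p g = iw E p w by move=> p; rewrite /iw ep.
exists L; split.
- by rewrite sL sz.
- by move=> p hp; apply/(sepE Esym Eirr); rewrite eiw; apply: sepL.
- exact: dL.
- by move=> p /(sepE Esym Eirr) hp; apply: cL; rewrite -eiw.
Qed.
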